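(* Let $M\in\mathbb{N}^{k\times l}$ have row sums $\alpha$ and column sums $\beta$, and let $(T,T')$ be semistandard tableaux of the same shape with contents $\alpha,\beta$. Suppose there is a rational function $f\in\mathbb{Q}(x)$ such that $p_M(T,T')=f(q)$ whenever $1/q$ is a prime power (with $\Bbbk=\mathbb{F}_{1/q}$). Then $f\in\mathbb{Q}[x]$.
   Context: Over $\Bbbk=\mathbb{F}_{1/q}$: $\mathrm{Fl}_\alpha$ is the set of chains $0=F_0\subseteq\cdots\subseteq F_k=\Bbbk^n$ with $\dim F_i=\alpha_1+\cdots+\alpha_i$; $(F,F')\in\mathrm{Fl}_\alpha\times\mathrm{Fl}_\beta$ has relative position $M$ if $\dim(F_i\cap F'_j)=\sum_{i'\le i,j'\le j}M_{i',j'}$; $N$ strictly compatible with $F$ means $N(F_i)\subseteq F_{i-1}$, and then $\mathrm{JF}(N;F)$ is the semistandard tableau whose entries $\le i$ form the shape $\mathrm{JF}(N|_{F_i})$, where $\mathrm{JF}(N)$ is the partition with $\lambda_1+\cdots+\lambda_i=\dim\ker N^i$. $\Omega_M$ is the set of triples $(F,F',N)$ with $F\in\mathrm{Fl}_\alpha$, $F'\in\mathrm{Fl}_\beta$ of relative position $M$ and $N$ strictly compatible with both; $\Omega_M^{T,T'}$ the subset with $\mathrm{JF}(N;F)=T$, $\mathrm{JF}(N;F')=T'$; $p_M(T,T')=|\Omega_M^{T,T'}|/|\Omega_M|$. *)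

(* Defs.v *)
From HB Require Import structures.
From mathcomp Require Import all_boot all_order all_algebra all_field.
From mathcomp Require Import boolp.
Set Implicit Arguments. Unset Strict Implicit. Unset Printing Implicit Defensive.
Import GRing.Theory.

(* A tableau is the list of its rows (row 0 = top row); entries are 1..k. *)
Definition tableau := seq (seq nat).

Definition trow (T : tableau) (r : nat) : seq nat := nth [::] T r.

Definition semistandard (k : nat) (T : tableau) : Prop :=
  [/\ (forall r, r < size T -> 0 < size (trow T r)),
      (forall r, size (trow T r.+1) <= size (trow T r)),
      (forall x, x \in flatten T -> (0 < x) && (x <= k)),
      (forall r, sorted leq (trow T r)) &
      (forall r c, c < size (trow T r.+1) ->
                   nth 0 (trow T r) c < nth 0 (trow T r.+1) c)].

Definition tshape (T : tableau) : seq nat := map size T.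

(* content a : 'I_k -> nat  (a i = number of entries equal to i+1) *)
Definition has_content (k : nat) (T : tableau) (a : 'I_k -> nat) : Prop :=
  forall i : 'I_k, count_mem i.+1 (flatten T) = a i.

Definition rowcnt (T : tableau) (i r : nat) : nat :=
  count (fun x => x <= i) (trow T r).

Section LinAlg.
Variables (F : finFieldType) (n : nat).
Local Open Scope nat_scope.

(* subspaces of F^n (row vectors) are represented canonically by square
   matrices A with <<A>> = A; a flag of type a is a function on 0..k *)
Definition is_flag (k : nat) (a : 'I_k -> nat) (Fl : {ffun 'I_k.+1 -> 'M[F]_n})
  : bool :=
  [forall i : 'I_k.+1, (<<Fl i>>%MS == Fl i)
       && (\rank (Fl i) == \sum_(j < k | j < i) a j)]
  && [forall i : 'I_k, (Fl (widen_ord (leqnSn k) i) <= Fl (lift ord0 i))%MS].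

Definition relpos (k l : nat) (M : 'M[nat]_(k, l))
  (Fl : {ffun 'I_k.+1 -> 'M[F]_n}) (Fl' : {ffun 'I_l.+1 -> 'M[F]_n}) : bool :=
  [forall i : 'I_k.+1, forall j : 'I_l.+1,
     \rank (Fl i :&: Fl' j)%MS
       == \sum_(i' < k | i' < i) \sum_(j' < l | j' < j) M i' j'].

(* N strictly compatible with the flag: N(F_i) subset F_{i-1};
   N acts on row vectors by v |-> v *m N *)
Definition strict_compat (k : nat) (Fl : {ffun 'I_k.+1 -> 'M[F]_n})
  (N : 'M[F]_n) : bool :=
  [forall i : 'I_k, ((Fl (lift ord0 i) *m N)%R <= Fl (widen_ord (leqnSn k) i))%MS].

(* dim ker (N|_V)^j = dim (V cap ker N^j) *)
Definition kerdim (N V : 'M[F]_n) (j : nat) : nat :=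
  \rank (V :&: kermx (N ^+ j)%R)%MS.

(* JF(N|_V) as a partition: lambda_1 + ... + lambda_j = dim ker (N|_V)^j,
   i.e. lambda_{r+1} = kerdim (r+1) - kerdim r *)
Definition jfpart (N V : 'M[F]_n) (r : nat) : nat :=
  kerdim N V r.+1 - kerdim N V r.

(* JF(N;Fl) = T : for each i, the entries <= i of T form the shape JF(N|_{F_i}) *)
Definition JF_eq (k : nat) (N : 'M[F]_n) (Fl : {ffun 'I_k.+1 -> 'M[F]_n})
  (T : tableau) : Prop :=
  forall (i : 'I_k.+1) (r : nat), rowcnt T i r = jfpart N (Fl i) r.

End LinAlg.

Definition triple (F : finFieldType) (n k l : nat) :=
  ({ffun 'I_k.+1 -> 'M[F]_n} * {ffun 'I_l.+1 -> 'M[F]_n} * 'M[F]_n)%type.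

Definition Omega (F : finFieldType) (k l : nat) (M : 'M[nat]_(k, l))
  (a : 'I_k -> nat) (b : 'I_l -> nat) : {set triple F (\sum_(i < k) a i)%N k l} :=
  [set x | [&& is_flag a x.1.1, is_flag b x.1.2, relpos M x.1.1 x.1.2,
              strict_compat x.1.1 x.2 & strict_compat x.1.2 x.2]].

Definition OmegaTT (F : finFieldType) (k l : nat) (M : 'M[nat]_(k, l))
  (a : 'I_k -> nat) (b : 'I_l -> nat) (T T' : tableau) :
  {set triple F (\sum_(i < k) a i)%N k l} :=
  [set x in Omega F M a b | `[< JF_eq x.2 x.1.1 T /\ JF_eq x.2 x.1.2 T' >] ].

Definition pM (F : finFieldType) (k l : nat) (M : 'M[nat]_(k, l))
  (a : 'I_k -> nat) (b : 'I_l -> nat) (T T' : tableau) : rat :=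
  ((#|OmegaTT F M a b T T'|)%:R / (#|Omega F M a b|)%:R)%R.

(* Main.v *)
Require Import Defs.
From HB Require Import structures.
From mathcomp Require Import all_boot all_order all_algebra all_field.
From mathcomp Require Import all_fingroup boolp.
From mathcomp Require Import polyrcf.
From mathcomp Require Import ring zify.
Import GRing.Theory.
Local Open Scope ring_scope.

Section Dec.
Variables (F : finFieldType) (n : nat).

Definition fn {m} (Fl : {ffun 'I_m.+1 -> 'M[F]_n}) (i : nat) : 'M[F]_n :=
  Fl (inord (minn i m)).

Lemma fn_val m Fl (i : 'I_m.+1) : fn Fl i = Fl i.
Proof.
rewrite /fn; have -> : minn i m = i by have := ltn_ord i; lia.
by rewrite inord_val.
Qed.

Definition nested {m} (Fl : {ffun 'I_m.+1 -> 'M[F]_n}) :=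
  forall i : 'I_m, (Fl (widen_ord (leqnSn m) i) <= Fl (lift ord0 i))%MS.

Lemma fn_mono m (Fl : {ffun 'I_m.+1 -> 'M[F]_n}) : nested Fl -> forall i j, (i <= j)%N -> (@fn m Fl i <= @fn m Fl j)%MS.
Proof.
move=> hn i j hij; rewrite -(subnKC hij); elim: (j - i)%N => [|d IH].
  by rewrite addn0.
apply: submx_trans IH _; rewrite addnS.
case: (ltnP (i + d) m) => h.
  have := hn (Ordinal h); rewrite /fn.
  have -> : widen_ord (leqnSn m) (Ordinal h) = inord (minn (i + d) m).
    by apply/val_inj; rewrite /= inordK; lia.
  have -> : lift ord0 (Ordinal h) = inord (minn (i + d).+1 m).
    by apply/val_inj; rewrite /= inordK /bump /=; lia.
  by [].
by rewrite /fn; have -> : minn (i + d).+1 m = minn (i + d) m by lia.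
Qed.

Lemma sum_lt_succ p (f : 'I_p -> nat) (i : 'I_p) :
  (\sum_(i' < p | (i' < i.+1)%N) f i' = \sum_(i' < p | (i' < i)%N) f i' + f i)%N.
Proof.
rewrite (bigD1 i) //= addnC; congr (_ + _); apply: eq_bigl => i'.
by rewrite ltnS ltn_neqAle andbC.
Qed.

Section Pair.
Variables (k l : nat) (M : 'M[nat]_(k, l)).
Variables (Fl : {ffun 'I_k.+1 -> 'M[F]_n}) (Fl' : {ffun 'I_l.+1 -> 'M[F]_n}).
Hypotheses (hn1 : nested Fl) (hn2 : nested Fl') (hrel : relpos M Fl Fl').

Definition sM (i j : nat) :=
  (\sum_(i' < k | (i' < i)%N) \sum_(j' < l | (j' < j)%N) M i' j')%N.

Lemma rkI i j : \rank (fn Fl i :&: fn Fl' j) = sM i j.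
Proof.
have := forallP hrel (inord (minn i k)) => /forallP /(_ (inord (minn j l))) /eqP ->.
rewrite /sM; apply: eq_big => [i'|i' _].
  by rewrite inordK; [apply/idP/idP; have := ltn_ord i'; lia | lia].
apply: eq_bigl => j'.
by rewrite inordK; [apply/idP/idP; have := ltn_ord j'; lia | lia].
Qed.

Definition C (i j : nat) : 'M[F]_n :=
  ((fn Fl i.+1 :&: fn Fl' j.+1) :\: (fn Fl i :&: fn Fl' j.+1 + fn Fl i.+1 :&: fn Fl' j))%MS.

Lemma rankC (i : 'I_k) (j : 'I_l) : \rank (C i j) = M i j.
Proof.
rewrite /C.
set I := (fn Fl i.+1 :&: fn Fl' j.+1)%MS.
set X := (fn Fl i :&: fn Fl' j.+1)%MS.
set Y := (fn Fl i.+1 :&: fn Fl' j)%MS.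
have sS : ((X + Y)%MS <= I)%MS.
  by rewrite addsmx_sub !capmxS ?fn_mono.
have h1 := mxrank_cap_compl I (X + Y)%MS.
have h2 : \rank (I :&: (X + Y))%MS = \rank (X + Y)%MS.
  by rewrite (elimT capmx_idPr sS).
have h3 := mxrank_sum_cap X Y.
have h4 : \rank (X :&: Y) = \rank (fn Fl i :&: fn Fl' j).
  apply: eqmx_rank; apply/andP; split.
    by rewrite sub_capmx (submx_trans (capmxSl _ _)) ?capmxSl //
      (submx_trans (capmxSr _ _)) ?capmxSr.
  by rewrite sub_capmx !capmxS ?fn_mono.
move: h1 h2 h3 h4; rewrite /I /X /Y !rkI.
have e1 := sum_lt_succ _ (fun i' => \sum_(j' < l | (j' < j.+1)%N) M i' j')%N i.
have e2 := sum_lt_succ _ (fun i' => \sum_(j' < l | (j' < j)%N) M i' j')%N i.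
have e3 := sum_lt_succ _ (fun j' => M i j') j.
rewrite /sM /= in e1 e2 e3 *; rewrite e1 e2 e3.
lia.
Qed.

Definition Sig (i j : nat) : 'M[F]_n :=
  (\sum_(i' < k | (i' < i)%N) \sum_(j' < l | (j' < j)%N) C i' j')%MS.

Lemma Sig_mono i1 i2 j1 j2 : (i1 <= i2)%N -> (j1 <= j2)%N -> (Sig i1 j1 <= Sig i2 j2)%MS.
Proof.
move=> hi hj; apply/sumsmx_subP => i' hi'; apply/sumsmx_subP => j' hj'.
apply: (sumsmx_sup i'); first by apply: leq_trans hi.
by apply: (sumsmx_sup j'); [apply: leq_trans hj | ].
Qed.

Lemma rk0 i j : sM i j = 0%N -> (fn Fl i :&: fn Fl' j)%MS = 0.
Proof. by move=> h; apply/eqP; rewrite -mxrank_eq0 rkI h. Qed.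

Lemma dec_le i j : (fn Fl i :&: fn Fl' j <= Sig i j)%MS.
Proof.
elim: i j => [|i IHi] j.
  by rewrite rk0 ?sub0mx // /sM big_pred0.
elim: j => [|j IHj].
  rewrite rk0 ?sub0mx // /sM big1 // => i' _; exact: big_pred0.
case: (ltnP i k) => hi; last first.
  have -> : fn Fl i.+1 = fn Fl i by rewrite /fn; congr (Fl (inord _)); lia.
  by apply: submx_trans (IHi j.+1) _; apply: Sig_mono.
case: (ltnP j l) => hj; last first.
  have -> : fn Fl' j.+1 = fn Fl' j by rewrite /fn; congr (Fl' (inord _)); lia.
  by apply: submx_trans IHj _; apply: Sig_mono.
set I := (fn Fl i.+1 :&: fn Fl' j.+1)%MS.
set S := (fn Fl i :&: fn Fl' j.+1 + fn Fl i.+1 :&: fn Fl' j)%MS.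
rewrite -(addsmx_diff_cap_eq I S) addsmx_sub; apply/andP; split.
  apply: (sumsmx_sup (Ordinal hi)) => //=; apply: (sumsmx_sup (Ordinal hj)) => //=.
apply: submx_trans (capmxSr _ _) _; rewrite addsmx_sub; apply/andP; split.
  by apply: submx_trans (IHi j.+1) _; apply: Sig_mono.
by apply: submx_trans IHj _; apply: Sig_mono.
Qed.

Lemma dec_ge i j : (Sig i j <= fn Fl i :&: fn Fl' j)%MS.
Proof.
apply/sumsmx_subP => i' hi'; apply/sumsmx_subP => j' hj'.
apply: submx_trans (diffmxSl _ _) _.
by rewrite capmxS ?fn_mono.
Qed.

End Pair.

Section Trans.
Variables (k l : nat) (M : 'M[nat]_(k, l)).
Hypothesis hsum : (\sum_(i < k) \sum_(j < l) M i j)%N = n.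

Definition good (Fl : {ffun 'I_k.+1 -> 'M[F]_n}) (Fl' : {ffun 'I_l.+1 -> 'M[F]_n}) :=
  [/\ nested Fl, nested Fl' & relpos M Fl Fl'].

Section OnePair.
Variables (Fl : {ffun 'I_k.+1 -> 'M[F]_n}) (Fl' : {ffun 'I_l.+1 -> 'M[F]_n}).
Hypothesis hg : good Fl Fl'.

Lemma full_cap : row_full (fn Fl k :&: fn Fl' l)%MS.
Proof.
case: hg => h1 h2 h3; rewrite /row_full (@rkI k l M Fl Fl' h3) -hsum /sM.
by apply/eqP; apply: eq_big => [i|i _]; rewrite ?ltn_ord //; apply: eq_bigl => j; rewrite ltn_ord.
Qed.

Lemma full_l : row_full (fn Fl' l).
Proof. by have := full_cap; rewrite -!sub1mx => h; apply: submx_trans h (capmxSr _ _). Qed.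

Lemma full_k : row_full (fn Fl k).
Proof. by have := full_cap; rewrite -!sub1mx => h; apply: submx_trans h (capmxSl _ _). Qed.

Lemma Fl_eq (i : 'I_k.+1) : (Fl i :=: Sig k l Fl Fl' i l)%MS.
Proof.
case: hg => h1 h2 h3.
apply/eqmxP/andP; split.
  rewrite -fn_val; apply: submx_trans (@dec_le k l M Fl Fl' h3 i l).
  by rewrite sub_capmx submx_refl submx_full // full_l.
by rewrite -fn_val; apply: submx_trans (@dec_ge k l Fl Fl' h1 h2 i l) (capmxSl _ _).
Qed.

Lemma Fl'_eq (j : 'I_l.+1) : (Fl' j :=: Sig k l Fl Fl' k j)%MS.
Proof.
case: hg => h1 h2 h3.
apply/eqmxP/andP; split.
  rewrite -fn_val; apply: submx_trans (@dec_le k l M Fl Fl' h3 k j).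
  by rewrite sub_capmx submx_refl submx_full // full_k.
by rewrite -fn_val; apply: submx_trans (@dec_ge k l Fl Fl' h1 h2 k j) (capmxSr _ _).
Qed.

Let h1 : nested Fl := let: And3 a _ _ := hg in a.
Let h2 : nested Fl' := let: And3 _ a _ := hg in a.
Let h3 : relpos M Fl Fl' := let: And3 _ _ a := hg in a.

Lemma Sig_cap i j : (Sig k l Fl Fl' i j :=: fn Fl i :&: fn Fl' j)%MS.
Proof.
by apply/eqmxP/andP; split; [apply: (@dec_ge k l Fl Fl' h1 h2) | apply: (@dec_le k l M Fl Fl' h3)].
Qed.

Definition blk (i : 'I_k) (j : 'I_l) : 'M[F]_(M i j, n) :=
  castmx (@rankC k l M Fl Fl' h1 h2 h3 i j, erefl n) (row_base (C k l Fl Fl' i j)).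

Definition E : 'M[F]_(\sum_(i < k) \sum_(j < l) M i j, n) :=
  \mxcol_(i < k) \mxcol_(j < l) blk i j.

Lemma Sig_full : Sig k l Fl Fl' k l = (\sum_(i < k) \sum_(j < l) C k l Fl Fl' i j)%MS.
Proof.
by apply: eq_big => [i|i _]; rewrite ?ltn_ord //; apply: eq_bigl => j; rewrite ltn_ord.
Qed.

Lemma E_eq : (E :=: Sig k l Fl Fl' k l)%MS.
Proof.
rewrite Sig_full; apply: (eqmx_trans (eqmx_col _)); apply: eqmx_sums => i _.
apply: (eqmx_trans (genmxE _)); apply: (eqmx_trans (eqmx_col _)).
apply: eqmx_sums => j _; apply: (eqmx_trans (genmxE _)).
apply: (eqmx_trans (eqmx_cast _ _)); exact: eq_row_base.
Qed.

Lemma E_full : row_full E.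
Proof. by rewrite /row_full E_eq Sig_cap; exact: full_cap. Qed.

Lemma E_free : row_free E.
Proof. by rewrite /row_free; apply/eqP; have := E_full; rewrite /row_full => /eqP ->. Qed.

End OnePair.

Lemma trans Fl1 Fl1' Fl2 Fl2' (g1 : good Fl1 Fl1') (g2 : good Fl2 Fl2') :
  exists g : 'M[F]_n, [/\ g \in unitmx,
    (forall i, (Fl1 i *m g == Fl2 i)%MS) & (forall j, (Fl1' j *m g == Fl2' j)%MS)].
Proof.
pose E1 := E _ _ g1; pose E2 := E _ _ g2; set g := pinvmx E1 *m E2.
have hE : E1 *m g = E2 by rewrite /g mulmxA mulmxVp ?mul1mx // E_free.
have hblk : forall i j, blk _ _ g1 i j *m g = blk _ _ g2 i j.
  move=> i j; have := congr1 (fun A => submxcol A i) hE.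
  rewrite /E1 /E2 /E mxcol_mul !mxcolK mxcol_mul => h.
  by have := congr1 (fun A => submxcol A j) h; rewrite !mxcolK.
have hC : forall (i : 'I_k) (j : 'I_l),
    (C k l Fl1 Fl1' i j *m g :=: C k l Fl2 Fl2' i j)%MS.
  move=> i j.
  have hb : forall Fa Fb (ga : good Fa Fb), (blk _ _ ga i j :=: C k l Fa Fb i j)%MS.
    by move=> Fa Fb ga; apply: (eqmx_trans (eqmx_cast _ _)); exact: eq_row_base.
  apply: (eqmx_trans (eqmxMr _ (eqmx_sym (hb _ _ g1)))).
  by rewrite hblk; exact: hb.
have hS : forall i j, (Sig k l Fl1 Fl1' i j *m g :=: Sig k l Fl2 Fl2' i j)%MS.
  move=> i j; apply: (eqmx_trans (sumsmxMr _ _ _)); apply: eqmx_sums => i' _.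
  apply: (eqmx_trans (sumsmxMr _ _ _)); apply: eqmx_sums => j' _; exact: hC.
exists g; split.
- rewrite -row_full_unit -sub1mx; apply: submx_trans (submxMl E1 _).
  by rewrite hE sub1mx E_full.
- move=> i; apply/eqmxP; apply: (eqmx_trans (eqmxMr _ (Fl_eq _ _ g1 i))).
  by apply: (eqmx_trans (hS _ _)); apply: eqmx_sym; exact: Fl_eq.
- move=> j; apply/eqmxP; apply: (eqmx_trans (eqmxMr _ (Fl'_eq _ _ g1 j))).
  by apply: (eqmx_trans (hS _ _)); apply: eqmx_sym; exact: Fl'_eq.
Qed.
End Trans.

End Dec.

Section Conj.
Variables (F : finFieldType) (n : nat) (g : 'M[F]_n).
Hypothesis gU : g \in unitmx.

Definition cj (N : 'M[F]_n) : 'M[F]_n := invmx g *m N *m g.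

Lemma cj_inj : injective cj.
Proof.
move=> N1 N2 h.
have e : forall N, N = g *m cj N *m invmx g.
  by move=> N; rewrite /cj !mulmxA mulmxK // mulmxV // mul1mx.
by rewrite (e N1) (e N2) h.
Qed.

Lemma cj_exp (N : 'M[F]_n) j : (cj N) ^+ j = cj (N ^+ j).
Proof.
elim: j => [|j IH].
  by rewrite !expr0 /cj mulmx1 mulVmx.
rewrite exprS IH exprS /cj -!mulmxE !mulmxA mulmxK //.
Qed.

Lemma capmxMu m1 m2 (A : 'M[F]_(m1, n)) (B : 'M[F]_(m2, n)) :
  ((A *m g) :&: (B *m g) :=: (A :&: B) *m g)%MS.
Proof.
apply/eqmxP/andP; split; last by rewrite sub_capmx !submxMr ?capmxSl ?capmxSr.
set X := (A *m g :&: B *m g)%MS.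
have hX : forall m (Z : 'M[F]_(m, n)), (X <= Z *m g)%MS -> (X *m invmx g <= Z)%MS.
  by move=> m Z h; rewrite -[Z](mulmxK gU Z) submxMr.
rewrite -[X](mulmxKV gU) submxMr // sub_capmx !hX ?capmxSl ?capmxSr //.
Qed.

Lemma kermx_cj (X : 'M[F]_n) : (kermx (cj X) :=: kermx X *m g)%MS.
Proof.
apply/eqmxP/andP; split.
  set K := kermx (cj X).
  rewrite -[K](mulmxKV gU) submxMr // sub_kermx.
  have := mulmx_ker (cj X); rewrite -/K /cj => h.
  have h' : K *m invmx g *m X *m g = 0 by rewrite -h !mulmxA.
  by rewrite -[K *m invmx g *m X](mulmxK gU) h' mul0mx.
by rewrite sub_kermx /cj !mulmxA mulmxK // mulmx_ker mul0mx.
Qed.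

Lemma cj_compat m (Fl1 Fl2 : {ffun 'I_m.+1 -> 'M[F]_n}) N :
  (forall i, (Fl1 i *m g == Fl2 i)%MS) -> strict_compat Fl1 N -> strict_compat Fl2 (cj N).
Proof.
move=> h /forallP hc; apply/forallP => i.
rewrite -(eqmxMr (cj N) (eqmxP (h _))) -(eqmxP (h (widen_ord _ i))).
by rewrite /cj !mulmxA mulmxK // submxMr // hc.
Qed.

Lemma cj_kerdim (V1 V2 : 'M[F]_n) N j :
  (V1 *m g == V2)%MS -> kerdim (cj N) V2 j = kerdim N V1 j.
Proof.
move=> h; rewrite /kerdim cj_exp.
rewrite (cap_eqmx (eqmx_sym (eqmxP h)) (kermx_cj _)) capmxMu mxrankMfree //.
by rewrite row_free_unit.
Qed.

Lemma cj_JF m (Fl1 Fl2 : {ffun 'I_m.+1 -> 'M[F]_n}) N T :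
  (forall i, (Fl1 i *m g == Fl2 i)%MS) -> JF_eq N Fl1 T -> JF_eq (cj N) Fl2 T.
Proof. by move=> h hJ i r; rewrite hJ /jfpart !(cj_kerdim _ _ _ _ (h i)). Qed.

End Conj.

Lemma card_fib (X Y : finType) (A : {set X * Y}) (S : {set X}) (Q : X -> pred Y) :
  (forall x, (x \in A) = (x.1 \in S) && Q x.1 x.2) ->
  #|A| = (\sum_(p in S) #|[set y | Q p y]|)%N.
Proof.
move=> hA.
rewrite -sum1_card (eq_bigl (fun x => (x.1 \in S) && Q x.1 x.2)) //.
rewrite -(pair_big_dep (fun p => p \in S) Q (fun _ _ => 1%N)).
apply: eq_bigr => p _; rewrite -sum1_card; apply: eq_bigl => y; by rewrite inE.
Qed.

Lemma gs (F : finFieldType) n (P : 'M[F]_n -> bool) :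
  P 0 -> (forall x y, P x -> P y -> P (x + y)) -> group_set [set N : 'M[F]_n | P N].
Proof.
move=> P0 PD; apply/group_setP; split; first by rewrite inE.
by move=> x y; rewrite !inE; apply: PD.
Qed.

Lemma dv (F : finFieldType) n (P : 'M[F]_n -> bool) :
  P 0 -> (forall x y, P x -> P y -> P (x + y)) ->
  (#|[set N : 'M[F]_n | P N]| %| #|F| ^ (n * n))%N.
Proof.
move=> P0 PD; have := cardSg (subsetT (Group (gs _ _ _ P0 PD))).
by rewrite cardsT card_mx.
Qed.

Section Count.
Variables (F : finFieldType) (k l : nat) (M : 'M[nat]_(k, l)).
Variables (a : 'I_k -> nat) (b : 'I_l -> nat) (T T' : tableau).
Hypotheses (ha : forall i, a i = (\sum_(j < l) M i j)%N).
Local Notation n := (\sum_(i < k) a i)%N.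

Lemma hsum : (\sum_(i < k) \sum_(j < l) M i j)%N = n.
Proof. by apply: eq_bigr => i _; rewrite ha. Qed.

Definition Sset : {set {ffun 'I_k.+1 -> 'M[F]_n} * {ffun 'I_l.+1 -> 'M[F]_n}} :=
  [set p | [&& is_flag a p.1, is_flag b p.2 & relpos M p.1 p.2]].
Definition Vp (p : {ffun 'I_k.+1 -> 'M[F]_n} * {ffun 'I_l.+1 -> 'M[F]_n}) :
  {set 'M[F]_n} := [set N | strict_compat p.1 N && strict_compat p.2 N].
Definition Wp (p : {ffun 'I_k.+1 -> 'M[F]_n} * {ffun 'I_l.+1 -> 'M[F]_n}) :
  {set 'M[F]_n} := [set N | (strict_compat p.1 N && strict_compat p.2 N)
                          && `[< JF_eq N p.1 T /\ JF_eq N p.2 T' >]].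

Lemma Omega_card : #|Omega F M a b| = (\sum_(p in Sset) #|Vp p|)%N.
Proof. by apply: card_fib => x; rewrite !inE -!andbA. Qed.

Lemma OmegaTT_card : #|OmegaTT F M a b T T'| = (\sum_(p in Sset) #|Wp p|)%N.
Proof. by apply: card_fib => x; rewrite !inE -!andbA. Qed.

Lemma good_of p : p \in Sset -> good F n k l M p.1 p.2.
Proof.
rewrite !inE => /and3P [f1 f2 r]; split => //.
  by move: f1 => /andP [_ /forallP].
by move: f2 => /andP [_ /forallP].
Qed.

Lemma fib_le p1 p2 : p1 \in Sset -> p2 \in Sset ->
  (#|Vp p1| <= #|Vp p2|)%N /\ (#|Wp p1| <= #|Wp p2|)%N.
Proof.
move=> /good_of g1 /good_of g2.
have [g [gU h1 h2]] := trans F n k l M hsum _ _ _ _ g1 g2.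
split; rewrite -(card_imset _ (cj_inj F n g gU)); apply: subset_leq_card;
  apply/subsetP => _ /imsetP [N hN ->]; move: hN; rewrite !inE.
  move/andP=> [c1 c2].
  by rewrite (cj_compat F n g gU _ _ _ _ h1 c1) (cj_compat F n g gU _ _ _ _ h2 c2).
move/andP=> [/andP [c1 c2] /asboolP [j1 j2]].
rewrite (cj_compat F n g gU _ _ _ _ h1 c1) (cj_compat F n g gU _ _ _ _ h2 c2) /=.
apply/asboolP; split; [exact: (cj_JF F n g gU _ _ _ _ _ h1) | exact: (cj_JF F n g gU _ _ _ _ _ h2)].
Qed.

Lemma sc0 m (Fl : {ffun 'I_m.+1 -> 'M[F]_n}) : strict_compat Fl 0.
Proof. by apply/forallP => i; rewrite mulmx0 sub0mx. Qed.

Lemma scD m (Fl : {ffun 'I_m.+1 -> 'M[F]_n}) x y :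
  strict_compat Fl x -> strict_compat Fl y -> strict_compat Fl (x + y).
Proof.
move=> /forallP hx /forallP hy; apply/forallP => i.
by rewrite mulmxDr addmx_sub ?hx ?hy.
Qed.

Lemma V_dvd p : (#|Vp p| %| #|F| ^ (n * n))%N.
Proof.
apply: dv; first by rewrite !sc0.
by move=> x y /andP [x1 x2] /andP [y1 y2]; rewrite !scD.
Qed.

Lemma V_gt0 p : (0 < #|Vp p|)%N.
Proof. by apply/card_gt0P; exists 0; rewrite inE !sc0. Qed.

Lemma W_le p : (#|Wp p| <= #|Vp p|)%N.
Proof.
by apply: subset_leq_card; apply/subsetP => x; rewrite !inE => /andP [].
Qed.

Lemma partA : exists N : nat, (N <= #|F| ^ (n * n))%N /\
  pM F M a b T T' * (#|F|%:R) ^+ (n * n) = N%:R.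
Proof.
rewrite /pM Omega_card OmegaTT_card.
have [S0 | [p0 hp0]] := set_0Vmem Sset.
  by exists 0%N; rewrite S0 !big_set0 mulr0n !mul0r.
have eV : (\sum_(p in Sset) #|Vp p| = #|Sset| * #|Vp p0|)%N.
  rewrite -sum_nat_const; apply: eq_bigr => p hp.
  have [h1 _] := fib_le _ _ hp hp0; have [h2 _] := fib_le _ _ hp0 hp.
  by apply/eqP; rewrite eqn_leq h1 h2.
have eW : (\sum_(p in Sset) #|Wp p| = #|Sset| * #|Wp p0|)%N.
  rewrite -sum_nat_const; apply: eq_bigr => p hp.
  have [_ h1] := fib_le _ _ hp hp0; have [_ h2] := fib_le _ _ hp0 hp.
  by apply/eqP; rewrite eqn_leq h1 h2.
rewrite eV eW.
have s0 : (0 < #|Sset|)%N by apply/card_gt0P; exists p0.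
have v0 := V_gt0 p0.
have [c hc] := dvdnP (V_dvd p0).
exists (#|Wp p0| * c)%N; split.
  by rewrite hc mulnC leq_mul2l W_le orbT.
rewrite -natrX hc !natrM; field.
by rewrite !Num.Theory.pnatr_eq0 -!lt0n s0 v0.
Qed.

End Count.

Section PartB.
Import Order.TTheory Num.Theory.

Lemma growth (s t : {poly rat}) : (size s < size t)%N ->
  exists B : rat, forall x, B <= x -> `|s.[x]| < `|t.[x]|.
Proof.
move=> hst.
have t0 : t != 0 by rewrite -size_poly_gt0 (leq_ltn_trans _ hst).
have hsz : (size (- (s * s))%R < size (t * t)%R)%N.
  rewrite size_polyN (size_mul t0 t0); apply: (leq_ltn_trans (size_polyMleq _ _)).
  have ht : (0 < size t)%N by rewrite size_poly_gt0.
  move: hst ht; move: (size s) (size t) => x y; lia.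
have hlc : 0 < lead_coef (t * t - s * s).
  rewrite lead_coefDl // lead_coefM -expr2 lt0r sqr_ge0 andbT sqrf_eq0.
  by rewrite lead_coef_eq0.
have [B hB] := poly_pinfty_gt_lc hlc.
exists B => x /hB; rewrite !hornerE => h.
have h2 : s.[x] ^+ 2 < t.[x] ^+ 2.
  by rewrite -subr_gt0 !expr2; apply: lt_le_trans h.
rewrite -(ltr_pXn2r (n:=2)) // ?qualifE //= -!normrX !ger0_norm ?sqr_ge0 //.
Qed.

Definition revp (e : nat) (p : {poly rat}) := \poly_(i < e.+1) p`_(e - i).

Lemma revpE (e : nat) (p : {poly rat}) (x : rat) : (size p <= e.+1)%N -> x != 0 ->
  (revp e p).[x] = x ^+ e * p.[x^-1].
Proof.
move=> hs x0; rewrite horner_poly (horner_coef_wide _ hs) mulr_sumr.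
rewrite (reindex_inj rev_ord_inj) /=; apply: eq_bigr => i _.
have hi : (i <= e)%N by rewrite -ltnS.
rewrite subKn // exprVn (expfB_cond _ (m:=e)) /=; last by rewrite (negPf x0).
by rewrite mulrCA.
Qed.

Lemma poly_eq_large (p q : {poly rat}) (B : rat) :
  (forall x, B <= x -> 0 < x -> p.[x] = q.[x]) -> p = q.
Proof.
move=> h; apply/eqP; rewrite -subr_eq0; apply/negPn/negP => hn.
have hs : (size (0 : {poly rat})%R < size (p - q)%R)%N by rewrite size_poly0 size_poly_gt0.
have [B1 hB1] := growth _ _ hs.
pose x := Num.max 1 (Num.max B B1).
have := hB1 x; rewrite /x !le_max lexx !orbT => /(_ isT).
rewrite horner0 normr0 !hornerE h ?subrr ?normr0 ?ltxx //;
  by rewrite ?le_max ?lt_max ?lexx ?ltr01 ?orbT.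
Qed.

Lemma nat_large (B : rat) : exists m : nat, forall Q : nat, (m < Q)%N -> B <= Q%:R.
Proof.
exists (Num.bound `|B|) => Q hQ.
apply: (le_trans (ler_norm B)); apply: ltW; apply: (lt_le_trans (archi_boundP (normr_ge0 B))).
by rewrite ler_nat ltnW.
Qed.

Lemma partB (P R : {poly rat}) (D : nat) :
  (forall m : nat, exists Q : nat, (m < Q)%N /\ R.[(Q%:R)^-1] != 0 /\
      exists N : nat, (N <= Q ^ D)%N /\
        P.[(Q%:R)^-1] / R.[(Q%:R)^-1] * (Q%:R) ^+ D = N%:R) ->
  (R %| P)%R.
Proof.
move=> H.
pose e := maxn (size P) (size R).
have sP : (size P <= e.+1)%N by rewrite /e; lia.
have sR : (size R <= e.+1)%N by rewrite /e; lia.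
pose P' := revp e P; pose R' := revp e R.
have key : forall Q : nat, (0 < Q)%N -> R.[(Q%:R)^-1] != 0 ->
    R'.[Q%:R] != 0 /\
    P.[(Q%:R)^-1] / R.[(Q%:R)^-1] * (Q%:R) ^+ D = ('X^D * P').[Q%:R] / R'.[Q%:R].
  move=> Q hQ hR; have Q0 : (Q%:R : rat) != 0 by rewrite pnatr_eq0 -lt0n.
  rewrite /R' /P' hornerM hornerXn !revpE //; split.
    by rewrite mulf_neq0 // expf_neq0.
  by field; rewrite hR expf_neq0.
have [Q0 [hQ0 [hR0 _]]] := H 0%N.
have R'0 : R' != 0.
  by apply/eqP => h; have [+ _] := key Q0 hQ0 hR0; rewrite h horner0 eqxx.
pose A := ('X^D * P') %/ R'; pose r := ('X^D * P') %% R'.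
have hdiv : 'X^D * P' = A * R' + r := divp_eq _ _.
have hval : forall Q : nat, (0 < Q)%N -> R.[(Q%:R)^-1] != 0 -> forall N : nat,
    P.[(Q%:R)^-1] / R.[(Q%:R)^-1] * (Q%:R) ^+ D = N%:R ->
    N%:R = A.[Q%:R] + r.[Q%:R] / R'.[Q%:R].
  move=> Q hQ hR N <-; have [hR' ->] := key Q hQ hR.
  by rewrite hdiv hornerD hornerM; field.
have r0 : r = 0.
  apply/eqP; apply/negPn/negP => rn0.
  have [A0 [c c0 hA]] := rat_poly_scale A.
  have c0' : (c%:~R : rat) != 0 by rewrite intr_eq0.
  have hs1 : (size (c%:~R *: r) < size R')%N by rewrite size_scale // ltn_modp.
  have [B1 hB1] := growth _ _ hs1.
  have hs2 : (size (0:{poly rat})%R < size r)%N by rewrite size_poly0 size_poly_gt0 rn0.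
  have [B2 hB2] := growth _ _ hs2.
  have [m hm] := nat_large (Num.max B1 B2).
  have [Q [hmQ [hR [N [_ hN]]]]] := H m.
  have hQ : (0 < Q)%N by lia.
  have [hR' _] := key Q hQ hR.
  have hv := hval Q hQ hR N hN.
  pose z : rat := c%:~R * N%:R - (A0.[Q%:Z])%:~R.
  have hA' : A.[Q%:R] = c%:~R^-1 * (A0.[Q%:Z])%:~R.
    by rewrite hA hornerZ -horner_map.
  have hz : z = c%:~R * r.[Q%:R] / R'.[Q%:R].
    by rewrite /z hv hA'; field; rewrite hR' c0'.
  have hmQ' := hm Q hmQ.
  have hz1 : `|z| < 1.
    have := hB1 (Q%:R);
    rewrite hornerZ.
    have hh : B1 <= Q%:R by apply: le_trans hmQ'; rewrite le_max lexx.
    move=> /(_ hh) hlt.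
    by rewrite hz normrM normrV ?unitfE // ltr_pdivrMr ?normr_gt0 // mul1r.
  have zint : z \is a Num.int by rewrite /z rpredB ?rpredM ?intr_int ?rpred_nat.
  have z0 : z = 0.
    by apply/eqP; apply: contraTT hz1 => hn; rewrite -leNgt norm_intr_ge1.
  have rQ : r.[Q%:R] = 0.
    move: hz; rewrite z0 => /esym /eqP; rewrite !mulf_eq0 invr_eq0 (negPf c0') (negPf hR') orbF /=.
    by move/eqP.
  have hh : B2 <= Q%:R by apply: le_trans hmQ'; rewrite le_max lexx orbT.
  by have := hB2 _ hh; rewrite rQ horner0 normr0 ltxx.
have hA : forall Q : nat, (0 < Q)%N -> R.[(Q%:R)^-1] != 0 -> forall N : nat,
    P.[(Q%:R)^-1] / R.[(Q%:R)^-1] * (Q%:R) ^+ D = N%:R -> N%:R = A.[Q%:R].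
  by move=> Q hQ hR N hN; rewrite (hval Q hQ hR N hN) r0 horner0 mul0r addr0.
have sA : (size A <= D.+1)%N.
  rewrite leqNgt; apply/negP => hlt.
  have hs : (size ('X^D : {poly rat}) < size A)%N by rewrite size_polyXn.
  have [B1 hB1] := growth _ _ hs; have [m hm] := nat_large B1.
  have [Q [hmQ [hR [N [hND hN]]]]] := H m.
  have hQ : (0 < Q)%N by lia.
  have := hB1 _ (hm Q hmQ); rewrite hornerXn -(hA Q hQ hR N hN) -natrX !normr_nat.
  by rewrite ltr_nat ltnNge hND.
have hPR : P = revp D A * R.
  apply: (@poly_eq_large _ _ 0) => y _ y0.
  have y0' : y != 0 by rewrite gt_eqF.
  have := congr1 (horner^~ y^-1) hdiv; rewrite r0 addr0 /= hornerM hornerXn hornerM.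
  rewrite /P' /R' !revpE ?invr_neq0 // invrK => h.
  rewrite hornerM revpE //.
  have e0 : y^-1 ^+ D * y^-1 ^+ e != 0 by rewrite mulf_neq0 // expf_neq0 // invr_neq0.
  apply: (mulfI e0); rewrite mulrA -(mulrA _ _ P.[y]) h.
  rewrite !exprVn; field; by rewrite ?expf_neq0.
by rewrite hPR dvdp_mull ?dvdpp.
Qed.

End PartB.

Theorem lemma7p15 (k l : nat) (M : 'M[nat]_(k, l))
  (a : 'I_k -> nat) (b : 'I_l -> nat) (T T' : tableau) (P R : {poly rat}) :
  (forall i : 'I_k, a i = \sum_(j < l) M i j)%N ->
  (forall j : 'I_l, b j = \sum_(i < k) M i j)%N ->
  semistandard k T -> semistandard l T' -> tshape T = tshape T' ->
  has_content T a -> has_content T' b ->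
  (forall F : finFieldType,
      let q : rat := ((#|F|%N)%:R)^-1 in
      R.[q] != 0 /\ pM F M a b T T' = P.[q] / R.[q]) ->
  (R %| P)%R.
Proof.
move=> ha _ _ _ _ _ _ H.
apply: (@partB P R ((\sum_(i < k) a i) * (\sum_(i < k) a i))%N) => m.
have [p hmp pp] := prime_above m.
exists p; split => //.
have := H (FinRing.Field.clone 'F_p _); rewrite /= card_Fp // => [[hR hpM]].
split => //.
have [N [hN1 hN2]] := partA (FinRing.Field.clone 'F_p _) k l M a b T T' ha.
exists N; split; first by rewrite -(card_Fp pp).
by rewrite -hpM -hN2 card_Fp.
Qed.
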